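(* Let $\alpha>0$, $\beta,\eta,\kappa\in\mathbb{R}$, $\rho>0$, $p\geq 1$, and $0\le a<x$. Let $f,g$ be two positive functions on $[0,\infty)$ with $f,g\in X^{p}_{c}(a,x)$ (for some $c\in\mathbb{R}$), such that ${}^{\rho}\mathcal{I}^{\alpha,\beta}_{a+,\eta,\kappa}f^{p}(x)<\infty$ and ${}^{\rho}\mathcal{I}^{\alpha,\beta}_{a+,\eta,\kappa}g^{p}(x)<\infty$. Suppose there are real numbers $m,M>0$ with $0<m\leq \frac{f(t)}{g(t)}\leq M$ for all $t\in[a,x]$. Define, for $t\in[a,x]$, $$h(f(t),g(t))=\max\left\{M\left[\left(\frac{M}{m}+1\right)f(t)-Mg(t)\right],\ \frac{(m+M)g(t)-f(t)}{m}\right\}.$$ Then $$\left({}^{\rho}\mathcal{I}^{\alpha,\beta}_{a+,\eta,\kappa}f^{p}(x)\right)^{1/p}+\left({}^{\rho}\mathcal{I}^{\alpha,\beta}_{a+,\eta,\kappa}g^{p}(x)\right)^{1/p}\leq 2\left({}^{\rho}\mathcal{I}^{\alpha,\beta}_{a+,\eta,\kappa}h^{p}(f,g)(x)\right)^{1/p}.$$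
   Context: For $c\in\mathbb{R}$ and $1\le p<\infty$, $X^{p}_{c}(a,b)$ denotes the space of Lebesgue measurable functions $f$ on $(a,b)$ with $\left(\int_a^b |t^{c}f(t)|^{p}\,\frac{dt}{t}\right)^{1/p}<\infty$. For $\alpha>0$, $\beta,\eta,\kappa\in\mathbb{R}$, $\rho>0$, $0\le a<x$, and a function $\varphi$, the generalized (Katugampola) fractional integral is $${}^{\rho}\mathcal{I}^{\alpha,\beta}_{a+,\eta,\kappa}\varphi(x)=\frac{\rho^{1-\beta}x^{\kappa}}{\Gamma(\alpha)}\int_{a}^{x}\frac{\tau^{\rho(\eta+1)-1}}{(x^{\rho}-\tau^{\rho})^{1-\alpha}}\varphi(\tau)\,d\tau,$$ whenever the integral exists. ${}^{\rho}\mathcal{I}^{\alpha,\beta}_{a+,\eta,\kappa}h^{p}(f,g)(x)$ denotes the operator applied to $\tau\mapsto h(f(\tau),g(\tau))^p$, evaluated at $x$. *)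

(* Defs.v *)
From HB Require Import structures.
From mathcomp Require Import all_boot all_order all_algebra.
From mathcomp Require Import all_classical all_reals all_analysis.
Set Implicit Arguments. Unset Strict Implicit. Unset Printing Implicit Defensive.
Import Order.TTheory GRing.Theory Num.Theory.
Import numFieldNormedType.Exports.
Local Open Scope classical_set_scope.
Local Open Scope ring_scope.

Definition Gamma {R : realType} (a : R) : R :=
  fine (\int[@lebesgue_measure R]_(t in `]0%R, +oo[)
          ((t `^ (a - 1)) * expR (- t))%:E)%E.

Definition Xpc {R : realType} (c p a b : R) (f : R -> R) : Prop :=
  measurable_fun `]a, b[ f /\
  (\int[@lebesgue_measure R]_(t in `]a, b[)
      ((`| t `^ c * f t | `^ p) / t)%:E < +oo)%E.

(* Katugampola generalized fractional integral
   ^rho I^{alpha,beta}_{a+,eta,kappa} phi (x), as an extended real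
   (the integral of a nonnegative integrand may be +oo). *)
Definition katI {R : realType} (rho alpha beta eta kappa a : R)
    (phi : R -> R) (x : R) : \bar R :=
  ((rho `^ (1 - beta) * x `^ kappa / Gamma alpha)%:E *
   \int[@lebesgue_measure R]_(tau in `]a, x[)
      (tau `^ (rho * (eta + 1) - 1) * (x `^ rho - tau `^ rho) `^ (alpha - 1)
        * phi tau)%:E)%E.

Definition hfun {R : realType} (m M u v : R) : R :=
  Num.max (M * ((M / m + 1) * u - M * v)) (((m + M) * v - u) / m).

(* Main.v *)
Require Import Defs.
From HB Require Import structures.
From mathcomp Require Import all_boot all_order all_algebra.
From mathcomp Require Import all_classical all_reals all_analysis.
From mathcomp Require Import ring lra.
Import Order.TTheory GRing.Theory Num.Theory.
Import numFieldNormedType.Exports.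
Local Open Scope classical_set_scope.
Local Open Scope ring_scope.

Import HBNNSimple.

Lemma nm_le_integral (R : realType) (D : set R) (f1 f2 : R -> \bar R) :
  (forall t, D t -> (0 <= f1 t)%E) -> (forall t, D t -> (f1 t <= f2 t)%E) ->
  (\int[@lebesgue_measure R]_(t in D) f1 t <= \int[@lebesgue_measure R]_(t in D) f2 t)%E.
Proof.
move=> f0 f12.
have f20 : forall t, D t -> (0 <= f2 t)%E by move=> t Dt; exact: le_trans (f0 t Dt) (f12 t Dt).
rewrite !ge0_integralE//.
apply: ereal_sup_le => _ [h /= hf <-]; exists h => //= t.
apply: le_trans (hf t) _; rewrite /patch; case: ifP => // /[1!inE] Dt.
exact: f12.
Qed.

Lemma hfun_ge (R : realType) (m M u v : R) :
  0 < m -> 0 < M -> 0 < v -> m <= u / v <= M ->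
  u <= hfun m M u v /\ v <= hfun m M u v.
Proof.
move=> m0 M0 v0 /andP[h1 h2].
rewrite ler_pdivlMr // in h1; rewrite ler_pdivrMr // in h2.
have vB : v <= ((m + M) * v - u) / m by rewrite ler_pdivlMr //; nra.
rewrite /hfun; split; last by rewrite le_max vB orbT.
rewrite le_max; have [M1|M1] := leP M 1.
  by apply/orP; right; apply: le_trans vB; nra.
apply/orP; left.
have e : M / m * m = M by rewrite divfK // gt_eqF.
set q := M / m in e *.
have q0 : 0 <= q by rewrite /q divr_ge0 // ltW.
have H : 0 <= M * q * (u - m * v) by apply: mulr_ge0; [apply: mulr_ge0 => //; exact: ltW|lra].
have E : M * q * (u - m * v) = M * q * u - M * M * v by rewrite mulrBr -e; ring.
rewrite E in H.
have u0 : 0 < u by nra.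
nra.
Qed.
Theorem theorem15 (R : realType) (alpha beta eta kappa rho p a x c m M : R)
    (f g : R -> R) :
  0 < alpha -> 0 < rho -> 1 <= p -> 0 <= a -> a < x ->
  (forall t, 0 <= t -> 0 < f t) -> (forall t, 0 <= t -> 0 < g t) ->
  Xpc c p a x f -> Xpc c p a x g ->
  (katI rho alpha beta eta kappa a (fun t => (f t `^ p)%R) x < +oo)%E ->
  (katI rho alpha beta eta kappa a (fun t => (g t `^ p)%R) x < +oo)%E ->
  0 < m -> 0 < M ->
  (forall t, a <= t <= x -> m <= f t / g t <= M) ->
  (katI rho alpha beta eta kappa a (fun t => (f t `^ p)%R) x `^ p^-1%R
   + katI rho alpha beta eta kappa a (fun t => (g t `^ p)%R) x `^ p^-1%R
   <= 2%:E * katI rho alpha beta eta kappa a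
               (fun t => (hfun m M (f t) (g t) `^ p)%R) x `^ p^-1%R)%E.
Proof.
move=> a0 r0 p1 a0' ax f0 g0 _ _ _ _ m0 M0 fg.
have C0 : 0 <= rho `^ (1 - beta) * x `^ kappa / Gamma alpha.
  apply: divr_ge0; first by apply: mulr_ge0; exact: powR_ge0.
  rewrite /Gamma; apply: fine_ge0; apply: integral_ge0 => t _.
  by rewrite lee_fin; apply: mulr_ge0; [exact: powR_ge0|exact: expR_ge0].
have K0 : forall tau, 0 <= tau `^ (rho * (eta + 1) - 1) * (x `^ rho - tau `^ rho) `^ (alpha - 1).
  by move=> tau; apply: mulr_ge0; exact: powR_ge0.
have kat0 : forall F, (forall t, a < t < x -> 0 <= F t) ->
    (0 <= katI rho alpha beta eta kappa a F x)%E.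
  move=> F F0; rewrite /katI; apply: mule_ge0; first by rewrite lee_fin.
  apply: integral_ge0 => t /=; rewrite in_itv /= => /F0 Ft.
  by rewrite lee_fin; apply: mulr_ge0.
have mono : forall F H, (forall t, a < t < x -> 0 <= F t <= H t) ->
    (katI rho alpha beta eta kappa a F x <= katI rho alpha beta eta kappa a H x)%E.
  move=> F H FH; rewrite /katI; apply: lee_wpmul2l; first by rewrite lee_fin.
  apply: nm_le_integral => t /=; rewrite in_itv /= => /FH /andP[Ft FHt];
    rewrite lee_fin.
    by apply: mulr_ge0.
  by apply: ler_wpM2l.
have p0 : 0 <= p by lra.
have pt : forall t, a < t < x ->
    0 <= f t `^ p <= hfun m M (f t) (g t) `^ p /\ 0 <= g t `^ p <= hfun m M (f t) (g t) `^ p.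
  move=> t /andP[ha tx].
  have t0 : 0 <= t by lra.
  have tI : a <= t <= x by apply/andP; split; lra.
  have [hf hg] := @hfun_ge _ m M (f t) (g t) m0 M0 (g0 t t0) (fg t tI).
  have F0 := f0 t t0; have G0 := g0 t t0.
  split; apply/andP; split; try exact: powR_ge0.
    by apply: ge0_ler_powR => //; rewrite nnegrE; lra.
  by apply: ge0_ler_powR => //; rewrite nnegrE; lra.
set If := katI _ _ _ _ _ _ _ x.
set Ig := katI _ _ _ _ _ _ _ x.
set Ih := katI _ _ _ _ _ _ _ x.
have Ih0 : (0 <= Ih)%E by apply: kat0 => t /pt [/andP[_ +] _]; apply: le_trans; exact: powR_ge0.
have hp0 : 0 <= p^-1 by rewrite invr_ge0.
have le1 : (If `^ p^-1 <= Ih `^ p^-1)%E.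
  apply: gt0_ler_poweR => //; rewrite ?in_itv /= ?leey ?andbT //.
    by apply: kat0 => t /pt [/andP[]].
  by apply: mono => t /pt [].
have le2 : (Ig `^ p^-1 <= Ih `^ p^-1)%E.
  apply: gt0_ler_poweR => //; rewrite ?in_itv /= ?leey ?andbT //.
    by apply: kat0 => t /pt [_ /andP[]].
  by apply: mono => t /pt [].
have -> : (2%:E * Ih `^ p^-1 = Ih `^ p^-1 + Ih `^ p^-1)%E.
  by rewrite -[2%R]/(1 + 1)%R EFinD ge0_muleDl // mul1e.
exact: leeD.
Qed.
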